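(* Let $\langle S\mid R\rangle\cong\mathbb{Z}^n$ be a 3-presentation, and suppose $g^ah^b$ represents the identity in $\langle S\mid R\rangle$, where $g,h\in S$ are distinct and $a,b$ are nonzero, relatively prime integers. Let $i$ be a new generator not in $S$, let $S'=(S\cup\{i\})\setminus\{g,h\}$, and let $R'$ be obtained from $R$ by replacing every occurrence of $g$ by $i^{b}$ and every occurrence of $h$ by $i^{-a}$ in each relation. Then $\langle S'\mid R'\rangle$ is a 3-presentation and $\langle S'\mid R'\rangle\cong\mathbb{Z}^n$.
   Context: A 3-presentation of a group $G$ is a group presentation $\langle S\mid R\rangle\cong G$ (with $S,R$ finite) in which each relation in $R$ is either the empty word, or $g^a$, or $g^ah^b$, or $g^ah^bi^c$, where $g,h,i\in S$ (not necessarily distinct) and $a,b,c\in\mathbb{Z}$ (after substitution, a product such as $(i^b)^{a'}(i^{-a})^{b'}$ is read as a single power of $i$). *)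

(* Defs.v *)
From HB Require Import structures.
From mathcomp Require Import all_boot all_order all_algebra.
From Stdlib Require Import Relations.
Set Implicit Arguments. Unset Strict Implicit. Unset Printing Implicit Defensive.
Import Order.TTheory GRing.Theory Num.Theory.
Local Open Scope ring_scope.

(* A word over generators S: a sequence of syllables s^k, k : int. *)
Definition word (S : Type) := seq (S * int).

(* One-step moves generating the congruence defining <S | R> = F(S)/<<R>>:
   deleting a trivial syllable, merging adjacent syllables of the same
   generator (together these give free reduction), deleting a relator. *)
Inductive pres_step (S : eqType) (R : seq (word S)) : word S -> word S -> Prop :=
| ps_zero (u v : word S) (s : S) : pres_step R (u ++ (s, 0%R) :: v) (u ++ v)
| ps_merge (u v : word S) (s : S) (m k : int) :
    pres_step R (u ++ (s, m) :: (s, k) :: v) (u ++ (s, m + k) :: v)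
| ps_rel (u v r : word S) : r \in R -> pres_step R (u ++ r ++ v) (u ++ v).

Definition pres_eq (S : eqType) (R : seq (word S)) : relation (word S) :=
  clos_refl_sym_trans _ (pres_step R).

Definition three_pres (S : finType) (R : seq (word S)) : Prop :=
  all (fun r : word S => size r <= 3)%N R.

Definition eval_Zn (S : Type) (n : nat) (f : S -> 'rV[int]_n) (w : word S) : 'rV[int]_n :=
  \sum_(p <- w) (f p.1 *~ p.2).

(* <S | R> is isomorphic to Z^n: there is a homomorphism F(S) -> Z^n
   (determined by the images of the generators) inducing a bijection
   (hence a group isomorphism) from F(S)/<<R>> onto Z^n. *)
Definition pres_iso_Zn (S : finType) (R : seq (word S)) (n : nat) : Prop :=
  exists f : S -> 'rV[int]_n,
    (forall v : 'rV[int]_n, exists w : word S, eval_Zn f w = v) /\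
    (forall w1 w2 : word S, eval_Zn f w1 = eval_Zn f w2 <-> pres_eq R w1 w2).

(* New generator set S' = (S u {i}) \ {g, h}, with i = None. *)
Definition newgen (S : finType) (g h : S) : finType :=
  {x : option S | (x != Some g) && (x != Some h)}.

Definition inew (S : finType) (g h : S) : newgen g h := exist _ None isT.

Definition subst_syll (S : finType) (g h : S) (a b : int) (p : S * int)
  : newgen g h * int :=
  (insubd (inew g h) (Some p.1),
   if p.1 == g then b * p.2 else if p.1 == h then - a * p.2 else p.2).

Definition subst_rels (S : finType) (g h : S) (a b : int) (R : seq (word S))
  : seq (word (newgen g h)) :=
  map (fun r => map (subst_syll g h a b) r) R.

(* Main.v *)
Require Import Defs.
From mathcomp Require Import all_boot all_order all_algebra.
From mathcomp Require Import ring.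
From Stdlib Require Import Relations.
Import GRing.Theory.
Local Open Scope ring_scope.
Set Implicit Arguments. Unset Strict Implicit.


Lemma tb (V : zmodType) (x y : V) (a b u v : int) :
  x *~ a + y *~ b = 0 -> u * a + v * b = 1 -> (x *~ v - y *~ u) *~ b = x.
Proof.
move=> hxy huv.
have hy : y *~ b = - (x *~ a) by apply/eqP; rewrite -addr_eq0 addrC hxy.
rewrite mulrzBl -!mulrzA (mulrC u b) (mulrzA y b u) hy mulNrz -mulrzA opprK -mulrzDr.
by rewrite -{2}[x]mulr1z; congr (_ *~ _); rewrite -huv; ring.
Qed.

Lemma ta (V : zmodType) (x y : V) (a b u v : int) :
  x *~ a + y *~ b = 0 -> u * a + v * b = 1 -> (x *~ v - y *~ u) *~ (- a) = y.
Proof.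
move=> hxy huv.
have hx : x *~ a = - (y *~ b) by apply/eqP; rewrite -addr_eq0 hxy.
rewrite mulrzBl -!mulrzA (mulrC v (-a)) mulNr mulrNz (mulrzA x a v) hx.
rewrite mulNrz opprK mulrN mulrNz opprK -mulrzA -mulrzDr.
by rewrite -{2}[y]mulr1z; congr (_ *~ _); rewrite -huv; ring.
Qed.

Lemma step_ctx (S : eqType) (R : seq (word S)) x y u v :
  pres_step R x y -> pres_step R (u ++ x ++ v) (u ++ y ++ v).
Proof.
case=> [u' v' s|u' v' s m k|u' v' r Hr].
- by rewrite -!catA /= catA; have := ps_zero R (u ++ u') (v' ++ v) s; rewrite -!catA.
- by have := ps_merge R (u ++ u') (v' ++ v) s m k; rewrite -!catA.
- by have := ps_rel (u ++ u') (v' ++ v) Hr; rewrite -!catA.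
Qed.

Lemma eq_ctx (S : eqType) (R : seq (word S)) x y u v :
  pres_eq R x y -> pres_eq R (u ++ x ++ v) (u ++ y ++ v).
Proof.
elim=> [x1 y1 H|x1|x1 y1 _ IH|x1 y1 z1 _ IH1 _ IH2].
- by apply: rst_step; apply: step_ctx.
- exact: rst_refl.
- exact: rst_sym.
- exact: rst_trans IH1 IH2.
Qed.

Lemma peq_trans (S : eqType) (R : seq (word S)) x y z :
  pres_eq R x y -> pres_eq R y z -> pres_eq R x z.
Proof. exact: rst_trans. Qed.

Lemma peq_sym (S : eqType) (R : seq (word S)) x y :
  pres_eq R x y -> pres_eq R y x.
Proof. exact: rst_sym. Qed.

Lemma eq_cat (S : eqType) (R : seq (word S)) x y x' y' :
  pres_eq R x y -> pres_eq R x' y' -> pres_eq R (x ++ x') (y ++ y').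
Proof.
move=> H1 H2; apply: rst_trans (_ : pres_eq R (y ++ x') _).
  by have := eq_ctx [::] x' H1.
by have := eq_ctx y [::] H2; rewrite !cats0.
Qed.

Lemma eval_cat (S : Type) n (f : S -> 'rV[int]_n) w1 w2 :
  eval_Zn f (w1 ++ w2) = eval_Zn f w1 + eval_Zn f w2.
Proof. by rewrite /eval_Zn big_cat. Qed.

Lemma eval_cons (S : Type) n (f : S -> 'rV[int]_n) p w :
  eval_Zn f (p :: w) = f p.1 *~ p.2 + eval_Zn f w.
Proof. by rewrite /eval_Zn big_cons. Qed.

Lemma eval_nil (S : Type) n (f : S -> 'rV[int]_n) : eval_Zn f [::] = 0.
Proof. by rewrite /eval_Zn big_nil. Qed.

Lemma eval_step (S : eqType) n (f : S -> 'rV[int]_n) R x y :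
  (forall r, r \in R -> eval_Zn f r = 0) ->
  pres_step R x y -> eval_Zn f x = eval_Zn f y.
Proof.
move=> HR; case=> [u v s|u v s m k|u v r Hr]; rewrite !eval_cat ?eval_cons //=.
- by rewrite mulr0z add0r.
- by congr (_ + _); rewrite addrA -mulrzDr.
- by rewrite (HR r Hr) add0r.
Qed.

Lemma eval_eq (S : eqType) n (f : S -> 'rV[int]_n) R x y :
  (forall r, r \in R -> eval_Zn f r = 0) ->
  pres_eq R x y -> eval_Zn f x = eval_Zn f y.
Proof.
move=> HR; elim=> [x1 y1 H|x1|x1 y1 _ IH|x1 y1 z1 _ IH1 _ IH2] //.
- exact: eval_step H.
- by rewrite IH1.
Qed.

Lemma insubdN (T : Type) (P : pred T) (sT : subType P) (u0 : sT) x :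
  ~~ P x -> insubd u0 x = u0.
Proof. by move=> H; rewrite /insubd insubN. Qed.

Definition coefs (S : finType) (g h : S) (a b : int) (s : S) : int :=
  if s == g then b else if s == h then - a else 1.

Lemma subst_syllE (S : finType) (g h : S) (a b : int) s k :
  subst_syll g h a b (s, k) = (insubd (inew g h) (Some s), coefs g h a b s * k).
Proof.
by rewrite /subst_syll /coefs /=; case: (s == g) => //; case: (s == h); rewrite ?mul1r.
Qed.

Lemma subst_step (S : finType) (g h : S) (a b : int) R x y :
  pres_step R x y ->
  pres_step (subst_rels g h a b R) (map (subst_syll g h a b) x)
                                   (map (subst_syll g h a b) y).
Proof.
case=> [u v s|u v s m k|u v r Hr]; rewrite !map_cat /=.
- by rewrite subst_syllE mulr0; apply: ps_zero.
- by rewrite !subst_syllE mulrDr; apply: ps_merge.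
- by apply: ps_rel; apply: map_f.
Qed.

Lemma subst_eq (S : finType) (g h : S) (a b : int) R x y :
  pres_eq R x y ->
  pres_eq (subst_rels g h a b R) (map (subst_syll g h a b) x)
                                 (map (subst_syll g h a b) y).
Proof.
elim=> [x1 y1 H|x1|x1 y1 _ IH|x1 y1 z1 _ IH1 _ IH2].
- by apply: rst_step; apply: subst_step.
- exact: rst_refl.
- exact: rst_sym.
- exact: rst_trans IH1 IH2.
Qed.

Unset Implicit Arguments.

Theorem mainTheorem10 (S : finType) (R : seq (word S)) (n : nat)
  (g h : S) (a b : int) :
  three_pres R -> pres_iso_Zn R n ->
  g != h -> a != 0 -> b != 0 -> coprimez a b ->
  pres_eq R [:: (g, a); (h, b)] [::] ->
  three_pres (subst_rels g h a b R) /\ pres_iso_Zn (subst_rels g h a b R) n.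
Proof.
move=> H3 [f [Hsurj Hiff]] gh a0 b0 cop Hgh.
split.
  rewrite /three_pres /subst_rels all_map; apply: sub_all H3 => r /=.
  by rewrite size_map.
have [[u v] /= huv] := coprimezP _ _ cop.
have Hab : f g *~ a + f h *~ b = 0.
  by have := (Hiff _ _).2 Hgh; rewrite !eval_cons eval_nil addr0.
have HR : forall r, r \in R -> eval_Zn f r = 0.
  move=> r Hr; rewrite -(eval_nil f); apply/Hiff; apply: rst_step.
  by have := ps_rel [::] [::] Hr; rewrite /= cats0.
pose t := f g *~ v - f h *~ u.
have tbE : t *~ b = f g := tb Hab huv.
have taE : t *~ (- a) = f h := ta Hab huv.
pose f' := fun x : newgen g h => if val x is Some s then f s else t.
pose al := subst_syll g h a b.
have evA : forall w, eval_Zn f' (map al w) = eval_Zn f w.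
  elim=> [|[s k] w IH]; first by rewrite !eval_nil.
  rewrite /= !eval_cons IH /al subst_syllE /=; congr (_ + _).
  rewrite /coefs; case: eqP => [->|/eqP sg].
    by rewrite insubdN /= ?eqxx // mulrzA tbE.
  case: eqP => [->|/eqP sh].
    by rewrite insubdN /= ?eqxx ?andbF // mulrzA taE.
  rewrite /f' insubdK ?mul1r //=.
  by rewrite unfold_in /= sg sh.
pose be := fun p : newgen g h * int =>
  if val p.1 is Some s then [:: (s, p.2)] else [:: (g, v * p.2); (h, - u * p.2)].
pose B := fun w : word (newgen g h) => flatten (map be w).
have evB : forall w, eval_Zn f (B w) = eval_Zn f' w.
  elim=> [|[x k] w IH]; first by rewrite !eval_nil.
  rewrite /B /= eval_cat -/(B w) IH eval_cons /= /be /f' /=.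
  case: (val x) => [s|] /=; first by rewrite eval_cons eval_nil addr0.
  rewrite !eval_cons eval_nil addr0 /t mulrzBl !mulrzA; congr (_ + _).
  by rewrite mulNr mulrNz mulNrz.
have HAB : forall w, pres_eq (subst_rels g h a b R) w (map al (B w)).
  elim=> [|[x k] w IH]; first exact: rst_refl.
  rewrite /B /= map_cat -/(B w) -cat1s; apply: eq_cat => //.
  rewrite /be /=; case Ex: (val x) => [s|] /=.
    have /andP [Hg Hh] : (Some s != Some g) && (Some s != Some h).
      by move: (valP x); rewrite Ex.
    have Hg' : (s == g) = false by apply: negbTE; exact: Hg.
    have Hh' : (s == h) = false by apply: negbTE; exact: Hh.
    rewrite /al subst_syllE.
    have -> : insubd (inew g h) (Some s) = x.
      by apply: val_inj; rewrite insubdK; [rewrite Ex | rewrite unfold_in /= Hg Hh].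
    rewrite /coefs Hg' Hh' mul1r.
    exact: rst_refl.
  rewrite /al !subst_syllE.
  have -> : insubd (inew g h) (Some g) = x by rewrite insubdN ?eqxx //; apply: val_inj; rewrite Ex.
  have -> : insubd (inew g h) (Some h) = x by rewrite insubdN ?eqxx ?andbF //; apply: val_inj; rewrite Ex.
  set c1 := coefs g h a b g * (v * k); set c2 := coefs g h a b h * (- u * k).
  have Hm : pres_eq (subst_rels g h a b R) [:: (x, c1); (x, c2)] [:: (x, c1 + c2)].
    apply: rst_step; exact: (ps_merge _ [::] [::] x c1 c2).
  have E : c1 + c2 = k.
    by rewrite /c1 /c2 /coefs eqxx eq_sym (negbTE gh) eqxx -[RHS]mul1r -huv; ring.
  by rewrite E in Hm; apply: rst_sym.
exists f'; split.
  move=> w; have [w0 <-] := Hsurj w; exists (map al w0); exact: evA.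
move=> w1 w2; split.
  move=> E; apply: peq_trans (HAB w1) _; apply: peq_trans (peq_sym (HAB w2)).
  by apply: subst_eq; apply/Hiff; rewrite !evB.
apply: eval_eq => r /mapP [r0 Hr0 ->]; rewrite evA; exact: HR.
Qed.
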